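(* $(\mathbb{S},\tau)$ is a corecursive algebra for $M\otimes-\colon\mathsf{SquaMS}\to\mathsf{SquaMS}$; that is, for every coalgebra $\beta\colon B\to M\otimes B$ in $\mathsf{SquaMS}$ there is a unique morphism $\beta^*\colon B\to\mathbb{S}$ with $\beta^*=\tau\circ(M\otimes\beta^* )\circ\beta$.
   Context: Let $M_0=\{(r,s)\in[0,1]^2: r\in\{0,1\}\text{ or } s\in\{0,1\}\}$. A square metric space is a pair $(X,S_X)$ with $X$ a metric space with all distances at most $2$ and $S_X\colon M_0\to X$ injective such that (sq1) for $i\in\{0,1\}$, $r,s\in[0,1]$: $d_X(S_X(i,r),S_X(i,s))=|s-r|$ and $d_X(S_X(r,i),S_X(s,i))=|s-r|$; (sq2) $d_X(S_X(r,s),S_X(t,u))\ge|r-t|+|s-u|$. $\mathsf{SquaMS}$: these objects, with short maps $f$ satisfying $f\circ S_X=S_Y$ as morphisms. Let $N=\{0,1,2\}^2$, $M=N\setminus\{(1,1)\}$, also viewed as points of $\mathbb{R}^2$. For $X$ in $\mathsf{SquaMS}$, $M\otimes X=(M\times X)/\!\sim$, where $\sim$ is generated by $(m,S_X(p))\sim(n,S_X(q))$ whenever $m,n\in M$ differ by exactly $1$ in exactly one coordinate and $(m+p)/3=(n+q)/3$; $m\otimes x$ is the class of $(m,x)$. With $d((a,u),(b,v))=\frac13 d_X(u,v)$ if $a=b$ and $2$ otherwise, $M\otimes X$ gets the quotient metric (infimum over finite chains of sums of consecutive distances, $\sim$-related consecutive pairs counting $0$). $S_{M\otimes X}(p)=m\otimes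 S_X(3p-m)$ for any $m\in M$ with $p\in(m+[0,1]^2)/3$; $(M\otimes f)(m\otimes x)=m\otimes f(x)$. The Sierpinski carpet $\mathbb{S}$ is the unique nonempty compact $K\subseteq[0,1]^2$ with $K=\bigcup_{m\in M}\frac13(m+K)$; it carries the taxicab metric $d((x,y),(x',y'))=|x-x'|+|y-y'|$ and $S_{\mathbb{S}}$ is the inclusion of $M_0\subseteq\mathbb{S}$, making it a square metric space. $\tau\colon M\otimes\mathbb{S}\to\mathbb{S}$ is $\tau(m\otimes s)=\frac13(m+s)$. *)

(* Defs.v *)
From Stdlib Require Import Reals Lra Arith Bool Relations ClassicalEpsilon.
From Coquelicot Require Import Coquelicot.
Open Scope R_scope.

Definition inM0 (p : R * R) : Prop :=
  0 <= fst p <= 1 /\ 0 <= snd p <= 1 /\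
  (fst p = 0 \/ fst p = 1 \/ snd p = 0 \/ snd p = 1).

Definition inMb (m : nat * nat) : bool :=
  andb (andb (Nat.ltb (fst m) 3) (Nat.ltb (snd m) 3)) (negb (andb (Nat.eqb (fst m) 1) (Nat.eqb (snd m) 1))).
Definition Mt : Type := { m : nat * nat | inMb m = true }.
Definition M00 : Mt := exist _ (0%nat, 0%nat) eq_refl.
Definition mx (m : Mt) : R := INR (fst (proj1_sig m)).
Definition my (m : Mt) : R := INR (snd (proj1_sig m)).
Definition Mt_eqb (a b : Mt) : bool :=
  andb (Nat.eqb (fst (proj1_sig a)) (fst (proj1_sig b)))
   (Nat.eqb (snd (proj1_sig a)) (snd (proj1_sig b))).

Definition adjacent (m n : Mt) : Prop :=
  let (m1, m2) := proj1_sig m in let (n1, n2) := proj1_sig n in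
  ((m1 = S n1 \/ n1 = S m1) /\ m2 = n2) \/ (m1 = n1 /\ (m2 = S n2 \/ n2 = S m2)).

Definition in_cell (m : Mt) (p : R * R) : Prop :=
  mx m / 3 <= fst p <= (mx m + 1) / 3 /\ my m / 3 <= snd p <= (my m + 1) / 3.

(* Data of a (candidate) square metric space: carrier, distance, and S_X.
   S_X is given as a total map on R^2; only its values on M0 matter. *)
Record SqData := {
  car :> Type;
  dist : car -> car -> R;
  Sq : R * R -> car
}.

Definition is_square_ms (X : SqData) : Prop :=
  (forall x y : X, 0 <= dist X x y) /\
  (forall x y : X, dist X x y = 0 <-> x = y) /\
  (forall x y : X, dist X x y = dist X y x) /\
  (forall x y z : X, dist X x z <= dist X x y + dist X y z) /\
  (forall x y : X, dist X x y <= 2) /\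
  (forall p q, inM0 p -> inM0 q -> Sq X p = Sq X q -> p = q) /\
  (forall (i r s : R), (i = 0 \/ i = 1) -> 0 <= r <= 1 -> 0 <= s <= 1 ->
     dist X (Sq X (i, r)) (Sq X (i, s)) = Rabs (s - r) /\
     dist X (Sq X (r, i)) (Sq X (s, i)) = Rabs (s - r)) /\
  (forall p q, inM0 p -> inM0 q ->
     dist X (Sq X p) (Sq X q) >= Rabs (fst p - fst q) + Rabs (snd p - snd q)).

Definition is_morphism (X Y : SqData) (f : X -> Y) : Prop :=
  (forall x y : X, dist Y (f x) (f y) <= dist X x y) /\
  (forall p, inM0 p -> f (Sq X p) = Sq Y p).

Definition eqv {A : Type} (rel : A -> A -> Prop) : A -> A -> Prop :=
  clos_refl_sym_trans A rel.
Definition quot {A : Type} (rel : A -> A -> Prop) : Type :=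
  { P : A -> Prop | exists a, P = eqv rel a }.
Definition cls {A : Type} (rel : A -> A -> Prop) (a : A) : quot rel :=
  exist _ (eqv rel a) (ex_intro _ a eq_refl).
Definition repr {A : Type} {rel : A -> A -> Prop} (c : quot rel) : A :=
  proj1_sig (constructive_indefinite_description _ (proj2_sig c)).

Section Tensor.
Variable X : SqData.

Definition tgen (a b : Mt * X) : Prop :=
  exists p q, inM0 p /\ inM0 q /\ snd a = Sq X p /\ snd b = Sq X q /\
    adjacent (fst a) (fst b) /\
    (mx (fst a) + fst p) / 3 = (mx (fst b) + fst q) / 3 /\
    (my (fst a) + snd p) / 3 = (my (fst b) + snd q) / 3.

Definition d0 (a b : Mt * X) : R :=
  if Mt_eqb (fst a) (fst b) then dist X (snd a) (snd b) / 3 else 2.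

Inductive chain (a : Mt * X) : Mt * X -> R -> Prop :=
| ch_refl : chain a a 0
| ch_dist b c r : chain a b r -> chain a c (r + d0 b c)
| ch_rel b c r : chain a b r -> eqv tgen b c -> chain a c r.

Definition tcar : Type := quot tgen.

Definition tdist (c1 c2 : tcar) : R :=
  real (Glb_Rbar (fun r => exists a b, cls tgen a = c1 /\ cls tgen b = c2 /\ chain a b r)).

Definition tSq (p : R * R) : tcar :=
  let m := epsilon (inhabits M00) (fun m => in_cell m p) in
  cls tgen (m, Sq X (3 * fst p - mx m, 3 * snd p - my m)).

Definition tensor : SqData := {| car := tcar; dist := tdist; Sq := tSq |}.

End Tensor.

Definition tensor_elt (X : SqData) (m : Mt) (x : X) : tensor X := cls (tgen X) (m, x).

Definition Mmap (X Y : SqData) (f : X -> Y) (c : tensor X) : tensor Y :=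
  let a := @repr _ (tgen X) c in tensor_elt Y (fst a) (f (snd a)).

Fixpoint in_approx (n : nat) (p : R * R) : Prop :=
  match n with
  | O => 0 <= fst p <= 1 /\ 0 <= snd p <= 1
  | S k => exists (m : Mt) (q : R * R), in_approx k q /\
             p = ((mx m + fst q) / 3, (my m + snd q) / 3)
  end.

(* the carpet: the attractor of the IFS, i.e. the intersection of the A_n *)
Definition in_carpet (p : R * R) : Prop := forall n, in_approx n p.

Lemma carpet_origin : in_carpet (0, 0).
Proof.
  intro n; induction n as [|n IH]; simpl.
  - lra.
  - exists M00, (0, 0). split; [exact IH|]. unfold mx, my; simpl. f_equal; field.
Qed.

Definition carpet_t : Type := { p : R * R | in_carpet p }.
Definition carpet0 : carpet_t := exist _ (0, 0) carpet_origin.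

Definition to_carpet (p : R * R) : carpet_t :=
  match excluded_middle_informative (in_carpet p) with
  | left H => exist _ p H
  | right _ => carpet0
  end.

Definition taxicab (x y : carpet_t) : R :=
  Rabs (fst (proj1_sig x) - fst (proj1_sig y)) + Rabs (snd (proj1_sig x) - snd (proj1_sig y)).

(* S_S is the inclusion of M0 into the carpet *)
Definition carpet : SqData := {| car := carpet_t; dist := taxicab; Sq := to_carpet |}.

Definition tau (c : tensor carpet) : carpet :=
  let a := @repr _ (tgen carpet) c in
  let s := proj1_sig (snd a) in
  to_carpet ((mx (fst a) + fst s) / 3, (my (fst a) + snd s) / 3).

(* Main.v *)
Require Import Defs.
From Stdlib Require Import ZArith Reals Lra Lia Arith Bool Relations ClassicalEpsilon FunctionalExtensionality ProofIrrelevance.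
From Coquelicot Require Import Coquelicot.
Import Defs.
Open Scope R_scope.

Ltac rabs_lra :=
  unfold Rabs in *;
  repeat match goal with
  | H : context [Rcase_abs ?x] |- _ => destruct (Rcase_abs x)
  | |- context [Rcase_abs ?x] => destruct (Rcase_abs x)
  end; lra.

Lemma mx_bounds (m : Mt) : (0 <= mx m <= 2 /\ 0 <= my m <= 2).
Proof.
  destruct m as [[i j] H]. unfold mx, my; simpl.
  unfold inMb in H; simpl in H.
  apply andb_prop in H as [H _]. apply andb_prop in H as [H1 H2].
  apply Nat.ltb_lt in H1; apply Nat.ltb_lt in H2.
  split; split; try apply pos_INR; replace 2 with (INR 2) by (simpl; lra); apply le_INR; lia.
Qed.

Lemma Mt_eqb_true (a b : Mt) : Mt_eqb a b = true -> mx a = mx b /\ my a = my b.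
Proof.
  unfold Mt_eqb, mx, my. intro H. apply andb_prop in H as [H1 H2].
  apply Nat.eqb_eq in H1; apply Nat.eqb_eq in H2. rewrite H1, H2. auto.
Qed.

Lemma cell_exists p : inM0 p -> exists m, in_cell m p.
Proof.
  destruct p as [x y]; unfold inM0, in_cell, mx, my; simpl.
  intros (Hx & Hy & Hb).
  destruct (Rle_lt_dec x (1/3)) as [a1|a1]; [| destruct (Rle_lt_dec x (2/3)) as [a2|a2]];
  (destruct (Rle_lt_dec y (1/3)) as [b1|b1]; [| destruct (Rle_lt_dec y (2/3)) as [b2|b2]]);
  first
  [ exfalso; destruct Hb as [H|[H|[H|H]]]; lra
  | exists (exist (fun m => inMb m = true) (0%nat,0%nat) eq_refl); simpl; repeat split; lra
  | exists (exist (fun m => inMb m = true) (0%nat,1%nat) eq_refl); simpl; repeat split; lra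
  | exists (exist (fun m => inMb m = true) (0%nat,2%nat) eq_refl); simpl; repeat split; lra
  | exists (exist (fun m => inMb m = true) (1%nat,0%nat) eq_refl); simpl; repeat split; lra
  | exists (exist (fun m => inMb m = true) (1%nat,2%nat) eq_refl); simpl; repeat split; lra
  | exists (exist (fun m => inMb m = true) (2%nat,0%nat) eq_refl); simpl; repeat split; lra
  | exists (exist (fun m => inMb m = true) (2%nat,1%nat) eq_refl); simpl; repeat split; lra
  | exists (exist (fun m => inMb m = true) (2%nat,2%nat) eq_refl); simpl; repeat split; lra ].
Qed.

Lemma cell_M0 p m : inM0 p -> in_cell m p -> inM0 (3 * fst p - mx m, 3 * snd p - my m).
Proof.
  destruct p as [x y]; unfold inM0, in_cell; simpl.
  pose proof (mx_bounds m) as [Bx By].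
  intros (Hx & Hy & Hb) (C1 & C2).
  split; [lra|]. split; [lra|].
  destruct Hb as [H|[H|[H|H]]]; [left|right;left|right;right;left|right;right;right]; lra.
Qed.

Lemma M0_approx n : forall p, inM0 p -> in_approx n p.
Proof.
  induction n; intros p Hp.
  - simpl. destruct Hp as (H1 & H2 & _). auto.
  - destruct (cell_exists p Hp) as [m Hm]. exists m, (3*fst p - mx m, 3*snd p - my m).
    split. apply IHn, cell_M0; auto. destruct p; simpl; f_equal; field.
Qed.

Lemma M0_carpet p : inM0 p -> in_carpet p.
Proof. intros H n; apply M0_approx; auto. Qed.

Lemma to_carpet_id p : in_carpet p -> proj1_sig (to_carpet p) = p.
Proof. intro H. unfold to_carpet. destruct excluded_middle_informative; simpl; [reflexivity | contradiction]. Qed.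

Lemma carpet_box s : in_carpet s -> 0 <= fst s <= 1 /\ 0 <= snd s <= 1.
Proof. intro H. exact (H 0%nat). Qed.

Lemma carpet_step m s : in_carpet s -> in_carpet ((mx m + fst s)/3, (my m + snd s)/3).
Proof.
  intros H n. destruct n.
  - simpl. pose proof (carpet_box s H). pose proof (mx_bounds m). lra.
  - exists m, s. split; auto.
Qed.

Lemma eqv_inv {A} (rel : A -> A -> Prop) (I : A -> Prop) :
  (forall a b, rel a b -> (I a <-> I b)) -> forall a b, eqv rel a b -> (I a <-> I b).
Proof. intros H a b E; unfold eqv in E; induction E; firstorder. Qed.

Lemma eqv_fun {A T : Type} (rel : A -> A -> Prop) (g : A -> T) :
  (forall a b, rel a b -> g a = g b) -> forall a b, eqv rel a b -> g a = g b.
Proof. intros H a b E; unfold eqv in E; induction E; try (apply H; assumption); congruence. Qed.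

Lemma repr_eqv {A} (rel : A -> A -> Prop) (a : A) : eqv rel a (repr (cls rel a)).
Proof.
  unfold repr, cls; simpl.
  destruct (constructive_indefinite_description _ _) as [a' Ha']. simpl.
  rewrite Ha'. apply rst_refl.
Qed.

Lemma cls_repr {A} (rel : A -> A -> Prop) (c : quot rel) : cls rel (repr c) = c.
Proof.
  destruct c as [P HP]. unfold cls, repr; simpl.
  destruct (constructive_indefinite_description _ HP) as [a Ha]; simpl.
  apply subset_eq_compat. symmetry; exact Ha.
Qed.

Lemma cls_eq {A} (rel : A -> A -> Prop) a b : cls rel a = cls rel b -> eqv rel a b.
Proof.
  intro H. apply (f_equal (@proj1_sig _ _)) in H. simpl in H. rewrite H. apply rst_refl.
Qed.

Lemma glb_ge (E : R -> Prop) (L r0 : R) : E r0 -> (forall r, E r -> L <= r) -> L <= real (Glb_Rbar E).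
Proof.
  intros H0 HL. destruct (Glb_Rbar_correct E) as [Hlb Hglb].
  assert (A1 : Rbar_le (Glb_Rbar E) r0) by (apply Hlb; auto).
  assert (A2 : Rbar_le L (Glb_Rbar E)) by (apply Hglb; intros r Hr; apply HL; auto).
  destruct (Glb_Rbar E); simpl in *; try contradiction; auto.
Qed.

Lemma pow3_ge n : INR n + 1 <= 3 ^ n.
Proof.
  induction n. simpl; lra. rewrite S_INR. simpl. pose proof (pos_INR n). lra.
Qed.

Lemma small_le (x c : R) : 0 <= c -> (forall n, x <= c * / 3 ^ n) -> x <= 0.
Proof.
  intros Hc H. destruct (Rle_lt_dec x 0) as [h|h]; auto. exfalso.
  destruct (archimed (c / x)) as [A1 _].
  set (z := up (c / x)) in *.
  assert (Hz : (0 <= z)%Z). { apply le_IZR. assert (0 <= c / x) by (apply Rdiv_le_0_compat; lra). lra. }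
  set (n := Z.to_nat z).
  assert (Hn : INR n = IZR z). { unfold n. rewrite INR_IZR_INZ, Z2Nat.id; auto. }
  specialize (H n). pose proof (pow3_ge n). pose proof (pow_lt 3 n ltac:(lra)).
  assert (x * 3 ^ n <= c).
  { apply Rmult_le_compat_r with (r := 3 ^ n) in H; [|lra].
    rewrite Rmult_assoc, Rinv_l in H; lra. }
  assert (c < x * INR n).
  { rewrite Hn. apply Rmult_lt_compat_l with (r := x) in A1; [|lra].
    unfold Rdiv in A1. rewrite <- Rmult_assoc, (Rmult_comm x c), Rmult_assoc, Rinv_r in A1; lra. }
  nra.
Qed.

Lemma small_zero (x c : R) : 0 <= c -> (forall n, Rabs x <= c * / 3 ^ n) -> x = 0.
Proof.
  intros Hc H.
  assert (Rabs x <= 0) by (apply (small_le _ c); auto).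
  pose proof (Rabs_pos x). apply Rabs_eq_0. lra.
Qed.

Lemma pow3_small (e : R) : 0 < e -> exists N, 2 * / 3 ^ N < e.
Proof.
  intro He. apply NNPP. intro Hn.
  assert (e <= 0).
  { apply (small_le e 2); [lra|]. intro n. apply Rnot_lt_le. intro h. apply Hn. exists n. lra. }
  lra.
Qed.

Lemma lim_close (u : nat -> R) : (forall n k, Rabs (u (n + k)%nat - u n) <= / 3^n) ->
  forall n, Rabs (real (Lim_seq u) - u n) <= / 3^n.
Proof.
  intros H.
  assert (Hex : ex_finite_lim_seq u).
  { apply ex_lim_seq_cauchy_corr. intro eps. destruct eps as [e He]; simpl.
    destruct (pow3_small e He) as [N HN]. exists N. intros n m Hn Hm.
    pose proof (H N (n - N)%nat) as A. pose proof (H N (m - N)%nat) as B.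
    replace (N + (n - N))%nat with n in A by lia. replace (N + (m - N))%nat with m in B by lia.
    rabs_lra. }
  destruct Hex as [l Hl]. rewrite (is_lim_seq_unique _ _ Hl). simpl.
  intro n. pose proof (proj1 (is_lim_seq_incr_n u n l) Hl) as Hn.
  assert (U : Rbar_le l (u n + / 3 ^ n)).
  { refine (is_lim_seq_le _ _ _ _ _ Hn (is_lim_seq_const _)).
    intro k. simpl. specialize (H n k). rewrite Nat.add_comm in H. rabs_lra. }
  assert (L : Rbar_le (u n - / 3 ^ n) l).
  { refine (is_lim_seq_le _ _ _ _ _ (is_lim_seq_const _) Hn).
    intro k. simpl. specialize (H n k). rewrite Nat.add_comm in H. rabs_lra. }
  simpl in U, L. rabs_lra.
Qed.
Definition l1 (x y : R*R) := Rabs (fst x - fst y) + Rabs (snd x - snd y).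

Definition Box (B : SqData) (g : B -> R*R) := forall b, 0 <= fst (g b) <= 1 /\ 0 <= snd (g b) <= 1.
Definition Spres (B : SqData) (g : B -> R*R) := forall p, inM0 p -> g (Sq B p) = p.
Definition Short (B : SqData) (g : B -> R*R) := forall b b', l1 (g b) (g b') <= dist B b b'.

Definition nxt (B : SqData) (beta : B -> tensor B) (b : B) : Mt * B := @repr _ (tgen B) (beta b).
Definition Gf (B : SqData) (g : B -> R*R) (a : Mt * B) : R*R :=
  ((mx (fst a) + fst (g (snd a)))/3, (my (fst a) + snd (g (snd a)))/3).
Definition stepF (B : SqData) (beta : B -> tensor B) (g : B -> R*R) (b : B) : R*R :=
  Gf B g (nxt B beta b).

Lemma inM0_00 : inM0 (0,0). Proof. unfold inM0; simpl; lra. Qed.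
Lemma inM0_01 : inM0 (0,1). Proof. unfold inM0; simpl; lra. Qed.
Lemma inM0_10 : inM0 (1,0). Proof. unfold inM0; simpl; lra. Qed.
Lemma inM0_11 : inM0 (1,1). Proof. unfold inM0; simpl; lra. Qed.

Lemma corner_dist (B : SqData) : is_square_ms B -> forall p, inM0 p ->
  dist B (Sq B p) (Sq B (0,0)) = fst p + snd p /\ dist B (Sq B p) (Sq B (0,1)) = fst p + 1 - snd p.
Proof.
  intros (Hpos & Hzero & Hsym & Htri & H2 & Hinj & Hsq1 & Hsq2) p Hp.
  pose proof (Hsq2 p (0,0) Hp inM0_00) as L1.
  pose proof (Hsq2 p (0,1) Hp inM0_01) as L2.
  destruct p as [x y]. destruct Hp as (Hx & Hy & Hb). simpl in *.
  assert (Z : 0 <= 0 <= 1) by lra. assert (O : 0 <= 1 <= 1) by lra.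
  assert (E0 : (0:R) = 0 \/ (0:R) = 1) by (left; reflexivity). assert (E1 : (1:R) = 0 \/ (1:R) = 1) by (right; reflexivity).
  destruct Hb as [H|[H|[H|H]]]; subst.
  - destruct (Hsq1 0 y 0 E0 Hy Z) as [A _]. destruct (Hsq1 0 y 1 E0 Hy O) as [C _].
    split; rabs_lra.
  - destruct (Hsq1 1 y 0 E1 Hy Z) as [A _]. destruct (Hsq1 0 1 0 E0 O Z) as [_ A2].
    destruct (Hsq1 1 y 1 E1 Hy O) as [C _]. destruct (Hsq1 1 1 0 E1 O Z) as [_ C2].
    pose proof (Htri (Sq B (1,y)) (Sq B (1,0)) (Sq B (0,0))).
    pose proof (Htri (Sq B (1,y)) (Sq B (1,1)) (Sq B (0,1))).
    split; rabs_lra.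
  - destruct (Hsq1 0 x 0 E0 Hx Z) as [_ A]. destruct (Hsq1 0 0 1 E0 Z O) as [C _].
    pose proof (Htri (Sq B (x,0)) (Sq B (0,0)) (Sq B (0,1))).
    split; rabs_lra.
  - destruct (Hsq1 1 x 0 E1 Hx Z) as [_ A]. destruct (Hsq1 0 1 0 E0 O Z) as [C _].
    pose proof (Htri (Sq B (x,1)) (Sq B (0,1)) (Sq B (0,0))).
    split; rabs_lra.
Qed.

Definition clamp (t : R) := Rmax 0 (Rmin 1 t).
Definition f0 (B : SqData) (b : B) : R*R :=
  let u := dist B b (Sq B (0,0)) in let v := dist B b (Sq B (0,1)) - 1 in
  (clamp ((u+v)/2), clamp ((u-v)/2)).

Lemma clamp_box t : 0 <= clamp t <= 1.
Proof. unfold clamp, Rmax, Rmin; repeat destruct Rle_dec; lra. Qed.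
Lemma clamp_lip s t : Rabs (clamp s - clamp t) <= Rabs (s - t).
Proof. unfold clamp, Rmax, Rmin; repeat destruct Rle_dec; rabs_lra. Qed.
Lemma clamp_id t : 0 <= t <= 1 -> clamp t = t.
Proof. unfold clamp, Rmax, Rmin; repeat destruct Rle_dec; lra. Qed.

Lemma f0_box B : Box B (f0 B).
Proof. intro b. unfold f0; simpl. split; apply clamp_box. Qed.

Lemma f0_spres B : is_square_ms B -> Spres B (f0 B).
Proof.
  intros HB p Hp. destruct (corner_dist B HB p Hp) as [A C].
  unfold f0. rewrite A, C. destruct p as [x y]; simpl.
  destruct Hp as (Hx & Hy & _); simpl in *.
  f_equal; rewrite clamp_id; [field | split; lra | field | split; lra].
Qed.

Lemma f0_short B : is_square_ms B -> Short B (f0 B).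
Proof.
  intros (Hpos & Hzero & Hsym & Htri & _) b b'. unfold l1, f0; simpl.
  pose proof (clamp_lip ((dist B b (Sq B (0, 0)) + (dist B b (Sq B (0, 1)) - 1)) / 2)
                        ((dist B b' (Sq B (0, 0)) + (dist B b' (Sq B (0, 1)) - 1)) / 2)).
  pose proof (clamp_lip ((dist B b (Sq B (0, 0)) - (dist B b (Sq B (0, 1)) - 1)) / 2)
                        ((dist B b' (Sq B (0, 0)) - (dist B b' (Sq B (0, 1)) - 1)) / 2)).
  pose proof (Htri b b' (Sq B (0,0))). pose proof (Htri b' b (Sq B (0,0))).
  pose proof (Htri b b' (Sq B (0,1))). pose proof (Htri b' b (Sq B (0,1))).
  pose proof (Hsym b b').
  rabs_lra.
Qed.

Lemma Sq_tensor (B : SqData) p : Sq (tensor B) p = tSq B p.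
Proof. reflexivity. Qed.
Lemma Sq_carpet p : Sq carpet p = to_carpet p.
Proof. reflexivity. Qed.

Lemma nxt_S (B : SqData) (beta : B -> tensor B) :
  is_square_ms B -> is_morphism B (tensor B) beta ->
  forall p, inM0 p -> exists q, inM0 q /\ snd (nxt B beta (Sq B p)) = Sq B q /\
     (mx (fst (nxt B beta (Sq B p))) + fst q)/3 = fst p /\
     (my (fst (nxt B beta (Sq B p))) + snd q)/3 = snd p.
Proof.
  intros HB [Hsh Hmor] p Hp.
  destruct HB as (_ & _ & _ & _ & _ & Hinj & _).
  unfold nxt. rewrite (Hmor p Hp), Sq_tensor. unfold tSq.
  set (m := epsilon (inhabits M00) (fun m => in_cell m p)).
  assert (Hm : in_cell m p) by (apply (epsilon_spec (inhabits M00) (fun m => in_cell m p)), cell_exists; auto).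
  set (a0 := (m, Sq B (3 * fst p - mx m, 3 * snd p - my m))).
  pose (I := fun a : Mt * B => exists q, inM0 q /\ snd a = Sq B q /\
              (mx (fst a) + fst q)/3 = fst p /\ (my (fst a) + snd q)/3 = snd p).
  assert (HI : I a0).
  { exists (3 * fst p - mx m, 3 * snd p - my m). split; [apply cell_M0; auto|].
    simpl. split; [reflexivity|]. split; field. }
  assert (Ht : forall a c, tgen B a c -> (I a <-> I c)).
  { intros a c (p1 & q1 & Hp1 & Hq1 & Ha & Hc & _ & E1 & E2); split; intros (q & Hq & Hs & F1 & F2).
    - exists q1. rewrite Ha in Hs. pose proof (Hinj _ _ Hp1 Hq Hs). subst q.
      split; [auto | split; [auto | split; lra]].
    - exists p1. rewrite Hc in Hs. pose proof (Hinj _ _ Hq1 Hq Hs). subst q.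
      split; [auto | split; [auto | split; lra]]. }
  exact (proj1 (eqv_inv (tgen B) I Ht a0 _ (repr_eqv _ a0)) HI).
Qed.

Lemma Gf_tgen (B : SqData) (g : B -> R*R) : Spres B g -> forall a c, tgen B a c -> Gf B g a = Gf B g c.
Proof.
  intros Hs a c (p & q & Hp & Hq & Ha & Hc & _ & E1 & E2).
  unfold Gf. rewrite Ha, Hc, (Hs p Hp), (Hs q Hq). f_equal; lra.
Qed.

Lemma l1_tri x y z : l1 x z <= l1 x y + l1 y z.
Proof. unfold l1. rabs_lra. Qed.

Lemma d0_bound (B : SqData) (g : B -> R*R) : Box B g -> Short B g ->
  forall b c, l1 (Gf B g b) (Gf B g c) <= d0 B b c.
Proof.
  intros Hb Hsh b c. unfold d0. destruct (Mt_eqb (fst b) (fst c)) eqn:E.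
  - destruct (Mt_eqb_true _ _ E) as [E1 E2]. specialize (Hsh (snd b) (snd c)).
    unfold l1, Gf in *; simpl. rewrite E1, E2. rabs_lra.
  - pose proof (Hb (snd b)). pose proof (Hb (snd c)).
    pose proof (mx_bounds (fst b)). pose proof (mx_bounds (fst c)).
    unfold l1, Gf; simpl. rabs_lra.
Qed.

Lemma chain_bound (B : SqData) (g : B -> R*R) : Box B g -> Spres B g -> Short B g ->
  forall a c r, chain B a c r -> l1 (Gf B g a) (Gf B g c) <= r.
Proof.
  intros Hb Hs Hsh a c r H. induction H.
  - unfold l1. rabs_lra.
  - pose proof (d0_bound B g Hb Hsh b c). pose proof (l1_tri (Gf B g a) (Gf B g b) (Gf B g c)). lra.
  - rewrite <- (eqv_fun (tgen B) (Gf B g) (Gf_tgen B g Hs) b c H0). auto.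
Qed.


Lemma step_box B beta g : Box B g -> Box B (stepF B beta g).
Proof.
  intros Hb b. unfold stepF, Gf; simpl. pose proof (Hb (snd (nxt B beta b))).
  pose proof (mx_bounds (fst (nxt B beta b))). lra.
Qed.

Lemma step_spres B beta : is_square_ms B -> is_morphism B (tensor B) beta ->
  forall g, Spres B g -> Spres B (stepF B beta g).
Proof.
  intros HB Hm g Hs p Hp. destruct (nxt_S B beta HB Hm p Hp) as (q & Hq & E & F1 & F2).
  unfold stepF, Gf. rewrite E, (Hs q Hq). destruct p; simpl in *; f_equal; lra.
Qed.

Lemma step_short B beta : is_square_ms B -> is_morphism B (tensor B) beta ->
  forall g, Box B g -> Spres B g -> Short B g -> Short B (stepF B beta g).
Proof.
  intros HB [Hsh Hm] g Hb Hs Hsd b b'.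
  apply Rle_trans with (dist (tensor B) (beta b) (beta b')); [| apply Hsh].
  change (dist (tensor B) (beta b) (beta b')) with (tdist B (beta b) (beta b')). unfold tdist.
  apply glb_ge with (r0 := 0 + d0 B (nxt B beta b) (nxt B beta b')).
  - exists (nxt B beta b), (nxt B beta b'). split; [apply cls_repr| split; [apply cls_repr|]].
    apply ch_dist, ch_refl.
  - intros r (a & c & Ha & Hc & Hch).
    pose proof (chain_bound B g Hb Hs Hsd a c r Hch).
    assert (Ea : Gf B g a = Gf B g (nxt B beta b)).
    { apply (eqv_fun (tgen B) (Gf B g) (Gf_tgen B g Hs)). apply cls_eq. rewrite Ha. unfold nxt. symmetry; apply cls_repr. }
    assert (Ec : Gf B g c = Gf B g (nxt B beta b')).
    { apply (eqv_fun (tgen B) (Gf B g) (Gf_tgen B g Hs)). apply cls_eq. rewrite Hc. unfold nxt. symmetry; apply cls_repr. }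
    unfold stepF. rewrite <- Ea, <- Ec. auto.
Qed.

Fixpoint Fn (B : SqData) (beta : B -> tensor B) (n : nat) : B -> R*R :=
  match n with O => f0 B | S k => stepF B beta (Fn B beta k) end.

Lemma Fn_props B beta : is_square_ms B -> is_morphism B (tensor B) beta ->
  forall n, Box B (Fn B beta n) /\ Spres B (Fn B beta n) /\ Short B (Fn B beta n).
Proof.
  intros HB Hm n. induction n as [|n (H1 & H2 & H3)].
  - split; [apply f0_box | split; [apply f0_spres | apply f0_short]; auto].
  - simpl. split; [apply step_box; auto | split; [apply step_spres | apply step_short]; auto].
Qed.

Lemma Fn_close B beta : is_square_ms B -> is_morphism B (tensor B) beta ->
  forall n b k, Rabs (fst (Fn B beta (n + k) b) - fst (Fn B beta n b)) <= / 3^n /\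
                Rabs (snd (Fn B beta (n + k) b) - snd (Fn B beta n b)) <= / 3^n.
Proof.
  intros HB Hm n. induction n; intros b k.
  - simpl (0 + k)%nat. destruct (Fn_props B beta HB Hm k) as [Hb _].
    pose proof (Hb b). pose proof (f0_box B b). simpl Fn. rewrite pow_O, Rinv_1. split; rabs_lra.
  - change (Fn B beta (S n + k) b) with (stepF B beta (Fn B beta (n + k)) b).
    change (Fn B beta (S n) b) with (stepF B beta (Fn B beta n) b).
    destruct (IHn (snd (nxt B beta b)) k) as [A C].
    assert (0 < 3 ^ n) by (apply pow_lt; lra).
    unfold stepF, Gf; simpl fst; simpl snd. simpl pow. rewrite Rinv_mult.
    set (t := / 3 ^ n) in *. split; rabs_lra.
Qed.

Definition fstar (B : SqData) (beta : B -> tensor B) (b : B) : R*R :=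
  (real (Lim_seq (fun n => fst (Fn B beta n b))), real (Lim_seq (fun n => snd (Fn B beta n b)))).

Lemma fstar_close B beta : is_square_ms B -> is_morphism B (tensor B) beta ->
  forall n b, Rabs (fst (fstar B beta b) - fst (Fn B beta n b)) <= / 3^n /\
              Rabs (snd (fstar B beta b) - snd (Fn B beta n b)) <= / 3^n.
Proof.
  intros HB Hm n b. unfold fstar; simpl. split; apply (lim_close (fun n => _ (Fn B beta n b)));
  intros; apply (Fn_close B beta HB Hm).
Qed.

Lemma fstar_fix B beta : is_square_ms B -> is_morphism B (tensor B) beta ->
  forall b, fstar B beta b = Gf B (fstar B beta) (nxt B beta b).
Proof.
  intros HB Hm b. set (x := snd (nxt B beta b)).
  assert (forall n, Rabs (fst (fstar B beta b) - fst (Gf B (fstar B beta) (nxt B beta b))) <= 2 * / 3 ^ n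
                 /\ Rabs (snd (fstar B beta b) - snd (Gf B (fstar B beta) (nxt B beta b))) <= 2 * / 3 ^ n).
  { intro n. destruct (fstar_close B beta HB Hm (S n) b) as [A1 A2].
    destruct (fstar_close B beta HB Hm n x) as [C1 C2].
    change (Fn B beta (S n) b) with (stepF B beta (Fn B beta n) b) in A1, A2.
    unfold stepF, Gf in *; simpl fst in *; simpl snd in *. fold x in A1, A2 |- *.
    simpl pow in A1, A2. rewrite Rinv_mult in A1, A2.
    assert (0 < 3 ^ n) by (apply pow_lt; lra).
    assert (0 < / 3 ^ n) by (apply Rinv_0_lt_compat; lra).
    set (t := / 3 ^ n) in *. split; rabs_lra. }
  apply injective_projections.
  - apply Rminus_diag_uniq. apply (small_zero _ 2); [lra|]. intro n; apply H.
  - apply Rminus_diag_uniq. apply (small_zero _ 2); [lra|]. intro n; apply H.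
Qed.

Lemma fstar_box B beta : is_square_ms B -> is_morphism B (tensor B) beta -> Box B (fstar B beta).
Proof.
  intros HB Hm b.
  assert (forall n, - fst (fstar B beta b) <= 1 * / 3 ^ n /\ fst (fstar B beta b) - 1 <= 1 * / 3 ^ n /\
                    - snd (fstar B beta b) <= 1 * / 3 ^ n /\ snd (fstar B beta b) - 1 <= 1 * / 3 ^ n).
  { intro n. destruct (fstar_close B beta HB Hm n b) as [A C].
    destruct (Fn_props B beta HB Hm n) as [Hb _]. pose proof (Hb b). rabs_lra. }
  assert (- fst (fstar B beta b) <= 0) by (apply (small_le _ 1); [lra|]; intro n; apply H).
  assert (fst (fstar B beta b) - 1 <= 0) by (apply (small_le _ 1); [lra|]; intro n; apply H).
  assert (- snd (fstar B beta b) <= 0) by (apply (small_le _ 1); [lra|]; intro n; apply H).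
  assert (snd (fstar B beta b) - 1 <= 0) by (apply (small_le _ 1); [lra|]; intro n; apply H).
  lra.
Qed.

Lemma fstar_spres B beta : is_square_ms B -> is_morphism B (tensor B) beta -> Spres B (fstar B beta).
Proof.
  intros HB Hm p Hp.
  assert (forall n, Rabs (fst (fstar B beta (Sq B p)) - fst p) <= 1 * / 3 ^ n /\
                    Rabs (snd (fstar B beta (Sq B p)) - snd p) <= 1 * / 3 ^ n).
  { intro n. destruct (fstar_close B beta HB Hm n (Sq B p)) as [A C].
    destruct (Fn_props B beta HB Hm n) as (_ & Hs & _). rewrite (Hs p Hp) in A, C. lra. }
  apply injective_projections; apply Rminus_diag_uniq; apply (small_zero _ 1); try lra; intro n; apply H.
Qed.

Lemma fstar_short B beta : is_square_ms B -> is_morphism B (tensor B) beta -> Short B (fstar B beta).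
Proof.
  intros HB Hm b b'.
  assert (l1 (fstar B beta b) (fstar B beta b') - dist B b b' <= 0).
  { apply (small_le _ 4); [lra|]. intro n.
    destruct (fstar_close B beta HB Hm n b) as [A C].
    destruct (fstar_close B beta HB Hm n b') as [A' C'].
    destruct (Fn_props B beta HB Hm n) as (_ & _ & Hsh). specialize (Hsh b b').
    unfold l1 in *. rabs_lra. }
  lra.
Qed.

Lemma fstar_carpet B beta : is_square_ms B -> is_morphism B (tensor B) beta ->
  forall b, in_carpet (fstar B beta b).
Proof.
  intros HB Hm b n. revert b. induction n; intro b.
  - simpl. apply (fstar_box B beta HB Hm b).
  - exists (fst (nxt B beta b)), (fstar B beta (snd (nxt B beta b))). split; auto.
    rewrite (fstar_fix B beta HB Hm b) at 1. reflexivity.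
Qed.

Definition invC (a : Mt * carpet) : R*R :=
  ((mx (fst a) + fst (proj1_sig (snd a)))/3, (my (fst a) + snd (proj1_sig (snd a)))/3).

Lemma invC_tgen a c : tgen carpet a c -> invC a = invC c.
Proof.
  intros (p & q & Hp & Hq & Ha & Hc & _ & E1 & E2).
  unfold invC. rewrite Ha, Hc. rewrite (Sq_carpet p), (Sq_carpet q).
  rewrite (to_carpet_id p (M0_carpet p Hp)). rewrite (to_carpet_id q (M0_carpet q Hq)).
  f_equal; lra.
Qed.

Lemma tau_eq c : tau c = to_carpet (invC (@repr _ (tgen carpet) c)).
Proof. reflexivity. Qed.

Lemma tau_Mmap (B : SqData) (g : B -> carpet) (c : tensor B) :
  tau (Mmap B carpet g c) = to_carpet (invC (fst (@repr _ (tgen B) c), g (snd (@repr _ (tgen B) c)))).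
Proof.
  unfold Mmap, tensor_elt; cbv zeta. rewrite tau_eq. f_equal. symmetry.
  apply (eqv_fun (tgen carpet) invC invC_tgen). apply repr_eqv.
Qed.

Lemma sol_eq (B : SqData) (beta : B -> tensor B) (g : B -> carpet) :
  (forall b, g b = tau (Mmap B carpet g (beta b))) ->
  forall b, proj1_sig (g b) = invC (fst (nxt B beta b), g (snd (nxt B beta b))).
Proof.
  intros Hg b. rewrite (Hg b), tau_Mmap. apply to_carpet_id.
  unfold invC; simpl. apply carpet_step. apply proj2_sig.
Qed.

Lemma carpet_eq (s t : carpet_t) : proj1_sig s = proj1_sig t -> s = t.
Proof. destruct s, t; simpl; intro; subst; f_equal; apply proof_irrelevance. Qed.

Theorem mainTheorem4 :
  forall (B : SqData), is_square_ms B ->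
  forall (beta : B -> tensor B), is_morphism B (tensor B) beta ->
  exists! (bstar : B -> carpet),
    is_morphism B carpet bstar /\
    (forall b : B, bstar b = tau (Mmap B carpet bstar (beta b))).
Proof.
  intros B HB beta Hm.
  pose (bstar := fun b : B => (to_carpet (fstar B beta b) : carpet)).
  assert (Hid : forall b, proj1_sig (bstar b) = fstar B beta b).
  { intro b. apply to_carpet_id, fstar_carpet; auto. }
  assert (Heq : forall b : B, bstar b = tau (Mmap B carpet bstar (beta b))).
  { intro b. rewrite tau_Mmap. fold (nxt B beta b). unfold invC; simpl. rewrite Hid.
    unfold bstar at 1. f_equal. apply (fstar_fix B beta HB Hm b). }
  exists bstar. split; [split; [split|] |].
  - intros b b'. change (l1 (proj1_sig (bstar b)) (proj1_sig (bstar b')) <= dist B b b').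
    rewrite !Hid. apply fstar_short; auto.
  - intros p Hp. rewrite Sq_carpet. unfold bstar. f_equal. apply fstar_spres; auto.
  - exact Heq.
  - intros g [_ Hg]. apply functional_extensionality. intro b0.
    assert (forall n b, l1 (proj1_sig (bstar b)) (proj1_sig (g b)) <= 2 * / 3 ^ n).
    { induction n; intro b.
      - pose proof (carpet_box _ (proj2_sig (bstar b))). pose proof (carpet_box _ (proj2_sig (g b))).
        rewrite pow_O, Rinv_1. unfold l1. rabs_lra.
      - rewrite (sol_eq B beta bstar Heq b), (sol_eq B beta g Hg b).
        specialize (IHn (snd (nxt B beta b))). unfold l1, invC in *; simpl.
        simpl pow. rewrite Rinv_mult. assert (0 < 3 ^ n) by (apply pow_lt; lra).
        set (t := / 3 ^ n) in *. rabs_lra. }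
    apply carpet_eq. apply injective_projections; apply Rminus_diag_uniq; apply (small_zero _ 2); try lra;
    intro n; specialize (H n b0); unfold l1 in H; pose proof (Rabs_pos (fst (proj1_sig (bstar b0)) - fst (proj1_sig (g b0))));
    pose proof (Rabs_pos (snd (proj1_sig (bstar b0)) - snd (proj1_sig (g b0)))); lra.
Qed.
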